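(* For all positive integers $m_1,m_2$ there exists an integer sequence $(f_j)_{j\ge0}$ such that for every $j\in\mathbb{Z}_{\ge0}$: (i) $0\le f_j\le m_1+m_2$; (ii) $f_j+j$ is divisible by $m_1$; and (iii) $((f_j-j)\bmod m_2)\in\{0,1,\dots,m_1\}$.
   Context: For integers $a$ and $b>0$, $(a\bmod b)\in\{0,\dots,b-1\}$ denotes the remainder of $a$ upon division by $b$. *)

(* Defs.v *)
(* integers Z. Z.modulo a b for b > 0 lies in [0, b-1],
   matching the paper's convention for (a mod b). *)
From Stdlib Require Import ZArith.

(* Main.v *)
Require Import Defs.
From Stdlib Require Import ZArith Lia.
Open Scope Z_scope.

Theorem lemma16 (m1 m2 : Z) (hm1 : 0 < m1) (hm2 : 0 < m2) :
  exists f : nat -> Z, forall j : nat,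
    (0 <= f j <= m1 + m2) /\
    (m1 | f j + Z.of_nat j) /\
    (0 <= (f j - Z.of_nat j) mod m2 <= m1).
Proof.
  exists (fun j => let r := (- Z.of_nat j) mod m1 in
                   let s := (r - Z.of_nat j) mod m2 in
                   if s <=? m1 then r else r + ((m2 - s + m1 - 1) / m1) * m1).
  intro j. cbv zeta.
  set (x := Z.of_nat j).
  set (r := (- x) mod m1).
  set (s := (r - x) mod m2).
  set (k := (m2 - s + m1 - 1) / m1).
  assert (Hr := Z.mod_pos_bound (- x) m1 hm1).
  assert (Hrd := Z.div_mod (- x) m1 ltac:(lia)).
  assert (Hs := Z.mod_pos_bound (r - x) m2 hm2).
  assert (Hsd := Z.div_mod (r - x) m2 ltac:(lia)).
  fold r in Hr, Hrd. fold s in Hs, Hsd.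
  assert (Hdiv : (m1 | r + x)).
  { exists (- ((- x) / m1)). lia. }
  destruct (Z.leb_spec s m1) as [Hle | Hgt].
  - split; [lia|]. split; [exact Hdiv|]. fold s. lia.
  - assert (Hk := Z.div_mod (m2 - s + m1 - 1) m1 ltac:(lia)).
    assert (Hk2 := Z.mod_pos_bound (m2 - s + m1 - 1) m1 hm1).
    fold k in Hk.
    set (t := (m2 - s + m1 - 1) mod m1) in *.
    assert (0 <= k) by (apply Z.div_pos; lia).
    split; [nia|].
    split.
    + replace (r + k * m1 + x) with (r + x + k * m1) by ring.
      apply Z.divide_add_r; [exact Hdiv | apply Z.divide_factor_r].
    + rewrite <- (Z.mod_unique (r + k * m1 - x) m2 ((r - x) / m2 + 1) (s + k * m1 - m2)); [lia | lia | lia].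
Qed.
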